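(* Let $\mathfrak{g}$ be a Lie algebra over a field $\mathbb{K}$ and let $\mathfrak{q},\mathfrak{w}$ be Lie subalgebras of $\mathfrak{g}$. Then $$\mathfrak{q}_{\{\mathfrak{w}\}}:=\{Z\in\mathfrak{q}+\mathfrak{w}\mid \mathrm{ad}(\mathfrak{q})^{h}(Z)\subseteq\mathfrak{q}+\mathfrak{w}\ \text{for all } h\ge 0\}$$ is the largest Lie subalgebra $\mathfrak{q}'$ of $\mathfrak{g}$ with $\mathfrak{q}\subseteq\mathfrak{q}'\subseteq\mathfrak{q}+\mathfrak{w}$. In particular, if $\mathfrak{g}$ is a complex Lie algebra, $\sigma$ an anti-$\mathbb{C}$-linear involution of $\mathfrak{g}$ and $\mathfrak{q}$ a complex Lie subalgebra, then $\mathfrak{q}_{\{\sigma(\mathfrak{q})\}}$ is the maximal complex Lie subalgebra $\mathfrak{q}'$ of $\mathfrak{g}$ with $\mathfrak{q}\subseteq\mathfrak{q}'\subseteq\mathfrak{q}+\sigma(\mathfrak{q})$.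
   Context: Here $\mathrm{ad}(\mathfrak{q})^{h}(Z)$ denotes the set of all iterated brackets $[Y_h,[\dots,[Y_1,Z]\dots]]$ with $Y_1,\dots,Y_h\in\mathfrak{q}$ (for $h=0$ it is $\{Z\}$). *)

(* Defs.v *)
From HB Require Import structures.
From mathcomp Require Import all_boot all_order all_algebra.
From mathcomp Require Import complex.
From mathcomp Require Import reals.
Set Implicit Arguments. Unset Strict Implicit. Unset Printing Implicit Defensive.
Import Order.TTheory GRing.Theory Num.Theory.
Local Open Scope ring_scope.

Definition is_lie_bracket (K : fieldType) (V : lmodType K) (br : V -> V -> V) : Prop :=
  [/\ (forall (a : K) (x y z : V), br (a *: x + y) z = a *: br x z + br y z),
      (forall (a : K) (x y z : V), br x (a *: y + z) = a *: br x y + br x z),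
      (forall x : V, br x x = 0)
    & (forall x y z : V, br x (br y z) + br y (br z x) + br z (br x y) = 0)].

Definition subset_of (V : Type) (A B : V -> Prop) : Prop := forall x, A x -> B x.

Definition is_lie_subalgebra (K : fieldType) (V : lmodType K) (br : V -> V -> V)
    (S : V -> Prop) : Prop :=
  [/\ S 0,
      (forall x y, S x -> S y -> S (x + y)),
      (forall (a : K) x, S x -> S (a *: x))
    & (forall x y, S x -> S y -> S (br x y))].

Definition sum_set (V : zmodType) (q w : V -> Prop) : V -> Prop :=
  fun z => exists x y, [/\ q x, w y & z = x + y].

Fixpoint ad_iter (V : Type) (br : V -> V -> V) (q : V -> Prop) (h : nat) (Z : V)
    : V -> Prop :=
  match h with
  | 0 => fun X => X = Z
  | h'.+1 => fun X => exists Y W, [/\ q Y, ad_iter br q h' Z W & X = br Y W]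
  end.

Definition q_sub (V : zmodType) (br : V -> V -> V) (q w : V -> Prop) : V -> Prop :=
  fun Z => sum_set q w Z /\
           forall (h : nat), subset_of (ad_iter br q h Z) (sum_set q w).

Definition largest_between (K : fieldType) (V : lmodType K) (br : V -> V -> V)
    (q w S : V -> Prop) : Prop :=
  [/\ is_lie_subalgebra br S, subset_of q S, subset_of S (sum_set q w)
    & forall q' : V -> Prop, is_lie_subalgebra br q' -> subset_of q q' ->
        subset_of q' (sum_set q w) -> subset_of q' S].

Definition image_set (V : Type) (f : V -> V) (A : V -> Prop) : V -> Prop :=
  fun y => exists x, A x /\ y = f x.

(* Main.v *)
Require Import Defs.
From HB Require Import structures.
From mathcomp Require Import all_boot all_order all_algebra.
From mathcomp Require Import complex.
From mathcomp Require Import reals.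
Import Order.TTheory GRing.Theory Num.Theory.
Local Open Scope ring_scope.
Set Implicit Arguments. Unset Strict Implicit.

Section Part1.
Variables (K : fieldType) (V : lmodType K) (br : V -> V -> V) (q w : V -> Prop).
Hypotheses (Hbr : is_lie_bracket br) (Hq : is_lie_subalgebra br q)
  (Hw : is_lie_subalgebra br w).

Let S := q_sub br q w.

Lemma brDl x y z : br (x + y) z = br x z + br y z.
Proof. by have [H _ _ _] := Hbr; rewrite -[x]scale1r H !scale1r. Qed.
Lemma brZl a x z : br (a *: x) z = a *: br x z.
Proof.
have [H _ _ _] := Hbr.
have h0 : forall z, br 0 z = 0.
  by move=> z'; have := brDl 0 0 z'; rewrite addr0 => e; apply/(addrI (br 0 z')); rewrite addr0 -e.
by rewrite -[a *: x]addr0 H h0 addr0.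
Qed.
Lemma brDr x y z : br x (y + z) = br x y + br x z.
Proof. by have [_ H _ _] := Hbr; rewrite -[y]scale1r H !scale1r. Qed.
Lemma brZr a x z : br x (a *: z) = a *: br x z.
Proof.
have [_ H _ _] := Hbr.
have h0 : forall z, br z 0 = 0.
  by move=> z'; have := brDr z' 0 0; rewrite addr0 => e; apply/(addrI (br z' 0)); rewrite addr0 -e.
by rewrite -[a *: z]addr0 H h0 addr0.
Qed.
Lemma brN x y : br x y = - br y x.
Proof.
have [_ _ Ha _] := Hbr.
have := Ha (x + y); rewrite brDl !brDr !Ha add0r addr0 => /eqP.
by rewrite addr_eq0 => /eqP.
Qed.
Lemma brNr x y : br x (- y) = - br x y.
Proof. by rewrite -scaleN1r brZr scaleN1r. Qed.
Lemma brNl x y : br (- x) y = - br x y.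
Proof. by rewrite -scaleN1r brZl scaleN1r. Qed.
Lemma brBl x y z : br (x - y) z = br x z - br y z.
Proof. by rewrite brDl brNl. Qed.

Lemma jac x y z : br x (br y z) = br (br x y) z + br y (br x z).
Proof.
have [_ _ _ J] := Hbr.
rewrite (brN (br x y) z) (brN x z) brNr.
have e := J x y z; move/eqP: e; rewrite -addrA addr_eq0 => /eqP ->.
by rewrite opprD addrC.
Qed.

Lemma sum_lin a u v : sum_set q w u -> sum_set q w v -> sum_set q w (a *: u + v).
Proof.
have [_ qD qZ _] := Hq; have [_ wD wZ _] := Hw.
move=> [x1 [y1 [h1 h2 ->]]] [x2 [y2 [h3 h4 ->]]].
exists (a *: x1 + x2), (a *: y1 + y2); split; [by apply qD; auto|by apply wD; auto|].
by rewrite scalerDr -!addrA; congr (_ + _); rewrite addrCA.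
Qed.

Lemma sum_add u v : sum_set q w u -> sum_set q w v -> sum_set q w (u + v).
Proof. by move=> hu hv; rewrite -[u]scale1r; apply sum_lin. Qed.

Lemma ad_lin h a Z1 Z2 X : ad_iter br q h (a *: Z1 + Z2) X ->
  exists X1 X2, [/\ ad_iter br q h Z1 X1, ad_iter br q h Z2 X2 & X = a *: X1 + X2].
Proof.
elim: h X => [|h IH] X /=; first by move=> ->; exists Z1, Z2.
move=> [Y [W [qY /IH [X1 [X2 [h1 h2 ->]]] ->]]].
exists (br Y X1), (br Y X2); split; first (by exists Y, X1); first (by exists Y, X2).
by rewrite brDr brZr.
Qed.

Lemma ad_add h Z1 Z2 X : ad_iter br q h (Z1 + Z2) X ->
  exists X1 X2, [/\ ad_iter br q h Z1 X1, ad_iter br q h Z2 X2 & X = X1 + X2].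
Proof.
move=> H; have [|X1 [X2 [h1 h2 e]]] := @ad_lin h 1 Z1 Z2 X; first by rewrite scale1r.
by exists X1, X2; rewrite e scale1r.
Qed.

Lemma ad_inner h Z X : ad_iter br q h.+1 Z X <-> exists Y, q Y /\ ad_iter br q h (br Y Z) X.
Proof.
elim: h X => [|h IH] X /=.
  split; first by move=> [Y [W [qY -> ->]]]; exists Y.
  by move=> [Y [qY ->]]; exists Y, Z.
split.
  move=> [Y [W [qY /IH [Y' [qY' hW]] ->]]]; exists Y'; split => //; by exists Y, W.
move=> [Y' [qY' [Y [W [qY hW ->]]]]]; exists Y, W; split => //; apply/IH; by exists Y'.
Qed.

Lemma stable_sub (P : V -> Prop) : subset_of P (sum_set q w) ->
  (forall x v, q x -> P v -> P (br x v)) -> subset_of P S.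
Proof.
move=> Psub Pst Z PZ; split; first exact: Psub.
move=> h X hX; apply: Psub.
elim: h X hX => [|h IH] X /=; first by move=> ->.
by move=> [Y [W [qY /IH PW ->]]]; apply: Pst.
Qed.

Lemma S_lin a u v : S u -> S v -> S (a *: u + v).
Proof.
move=> [hu Hu] [hv Hv]; split; first exact: sum_lin.
move=> h X /ad_lin [X1 [X2 [h1 h2 ->]]]; apply: sum_lin; [exact: Hu h1|exact: Hv h2].
Qed.
Lemma S_add u v : S u -> S v -> S (u + v).
Proof. by move=> hu hv; rewrite -[u]scale1r; apply S_lin. Qed.
Lemma q_in_sum x : q x -> sum_set q w x.
Proof. by have [w0 _ _ _] := Hw => qx; exists x, 0; rewrite addr0. Qed.

Lemma q_S : subset_of q S.
Proof. apply: stable_sub; first exact: q_in_sum. by have [_ _ _ B] := Hq => x v; apply: B. Qed.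

Lemma S_opp u : S u -> S (- u).
Proof.
move=> hu; rewrite -scaleN1r -[_ *: u]addr0; apply S_lin => //.
by apply: q_S; have [] := Hq.
Qed.

Lemma S_ad x Z : q x -> S Z -> S (br x Z).
Proof.
move=> qx [hZ HZ]; split.
  by apply: (HZ 1); exists x, Z.
move=> h X hX; apply: (HZ h.+1); apply/ad_inner; by exists x.
Qed.

Lemma S_decomp Z : S Z -> exists a b, [/\ q a, w b, S b & Z = a + b].
Proof.
move=> SZ; have [[a [b [qa wb eZ]]] _] := SZ.
exists a, b; split => //.
have -> : b = Z - a by rewrite eZ addrC addKr.
by apply: S_add => //; apply: S_opp; apply: q_S.
Qed.

Lemma key h : forall y1 y2, w y1 -> S y1 -> w y2 -> S y2 ->
  forall X, ad_iter br q h (br y1 y2) X -> sum_set q w X.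
Proof.
have inS : forall Z h X, S Z -> ad_iter br q h Z X -> sum_set q w X.
  by move=> Z h' X [_ HZ]; apply: HZ.
elim: h => [|h IH] y1 y2 w1 S1 w2 S2 X.
  move=> /= ->; have [w0 _ _ B] := Hw; have [q0 _ _ _] := Hq.
  by exists 0, (br y1 y2); split => //; [apply: B | rewrite add0r].
move=> /ad_inner [x [qx]]; rewrite jac.
have [a [b [qa wb Sb e1]]] := S_decomp (S_ad qx S1).
have [a' [b' [qa' wb' Sb' e2]]] := S_decomp (S_ad qx S2).
rewrite e1 e2 brDl brDr (brN y1 a').
move=> /ad_add [X1 [X2 [h1 h2 ->]]]; apply: sum_add.
  move: h1 => /ad_add [X3 [X4 [h3 h4 ->]]]; apply: sum_add.
    by apply: (inS _ _ _ _ h3); apply: S_ad => //; apply: q_S.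
  exact: (IH b y2 wb Sb w2 S2 _ h4).
move: h2 => /ad_add [X3 [X4 [h3 h4 ->]]]; apply: sum_add.
  by apply: (inS _ _ _ _ h3); apply: S_opp; apply: S_ad => //; apply: q_S.
exact: (IH y1 b' w1 S1 wb' Sb' _ h4).
Qed.

Lemma S_br y1 y2 : w y1 -> S y1 -> w y2 -> S y2 -> S (br y1 y2).
Proof.
move=> w1 S1 w2 S2; split; first by apply: (@key 0 y1 y2 w1 S1 w2 S2).
by move=> h X; apply: key.
Qed.

Lemma part1 : largest_between br q w S.
Proof.
split.
- split; first by apply: q_S; have [] := Hq.
  + exact: S_add.
  + by move=> a x Sx; rewrite -[a *: x]addr0; apply: S_lin => //; apply: q_S; have [] := Hq.
  move=> Z1 Z2 S1 S2.
  have [x1 [y1 [q1 w1 S1' ->]]] := S_decomp S1.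
  have [x2 [y2 [q2 w2 S2' ->]]] := S_decomp S2.
  rewrite brDl; apply: S_add; first by apply: S_ad => //; apply: S_add => //; apply: q_S.
  rewrite brDr; apply: S_add; last exact: S_br.
  by rewrite brN; apply: S_opp; apply: S_ad.
- exact: q_S.
- by move=> Z [].
move=> q' [_ _ _ B] qq' q'sub; apply: stable_sub => // x v qx q'v.
by apply: B => //; apply: qq'.
Qed.
End Part1.

Theorem lemma3p5 :
  (forall (K : fieldType) (V : lmodType K) (br : V -> V -> V) (q w : V -> Prop),
     is_lie_bracket br -> is_lie_subalgebra br q -> is_lie_subalgebra br w ->
     largest_between br q w (q_sub br q w))
  /\
  (forall (R : realType) (V : lmodType R[i]) (br : V -> V -> V)
          (sigma : V -> V) (q : V -> Prop),
     is_lie_bracket br ->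
     (forall x y : V, sigma (x + y) = sigma x + sigma y) ->
     (forall (a : R[i]) (x : V), sigma (a *: x) = a^* *: sigma x) ->
     (forall x y : V, sigma (br x y) = br (sigma x) (sigma y)) ->
     (forall x : V, sigma (sigma x) = x) ->
     is_lie_subalgebra br q ->
     largest_between br q (image_set sigma q) (q_sub br q (image_set sigma q))).
Proof.
split; first by move=> K V br q w Hb Hq Hw; apply: part1.
move=> R V br sigma q Hb sD sZ sB sK Hq; apply: part1 => //.
have [q0 qD qZ qB] := Hq.
have s0 : sigma 0 = 0.
  by have := sD 0 0; rewrite addr0 => e; apply/(addrI (sigma 0)); rewrite addr0 -e.
split.
- by exists 0; rewrite s0.
- by move=> _ _ [x [qx ->]] [y [qy ->]]; exists (x + y); split; [apply: qD|rewrite sD].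
- move=> a _ [x [qx ->]]; exists (a^* *: x); split; first exact: qZ.
  by rewrite sZ conjCK.
- by move=> _ _ [x [qx ->]] [y [qy ->]]; exists (br x y); split; [apply: qB|rewrite sB].
Qed.
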